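(* Let $H$ be a commutative monoid with identity $1_H$ and group of units $H^\times$. The following are equivalent: (a) $\mathcal{P}_{\mathrm{fin},1}(H)$ is UmF; (b) $H\setminus H^\times$ is a breakable subsemigroup of $H$, the group of units $H^\times$ has order $\le 2$, and $H$ is the trivial ideal extension of $H\setminus H^\times$ by $H^\times$.
   Context: For a monoid $H$, $\mathcal{P}_{\mathrm{fin},1}(H)$ denotes the set of all non-empty finite subsets of $H$ containing $1_H$; it is a monoid under setwise multiplication $XY=\{xy: x\in X, y\in Y\}$. Divisibility in a monoid $M$: $x\mid_M y$ iff $y\in MxM=\{uxv: u,v\in M\}$; $x,y$ are associated if each divides the other; $x$ properly divides $y$ if $x\mid_M y$ but $y\nmid_M x$. A unit-divisor is an element dividing $1_M$; otherwise it is a non-unit-divisor. An irreducible of $M$ is a non-unit-divisor $a$ such that $a\neq xy$ for all non-unit-divisors $x,y$ that both properly divide $a$. A factorization of $x\in M$ is a finite word $a_1\ast\cdots\ast a_n$ (possibly empty) over the set of irreducibles of $M$ with $a_1\cdots a_n=x$. For words $\mathfrak a,\mathfrak b$ over $M$, write $\mathfrak a\sqsubseteq\mathfrak b$ if $\mathfrak a$ is, up to replacing letters by associated elements, a subword (subsequence) of some permutation of $\mathfrak b$; $\mathfrak a,\mathfrak b$ are equivalent if $\mathfrak a\sqsubseteq\mathfrak b\sqsubseteq\mathfrak a$. A factorization $\mathfrak a$ of $x$ is minimal if there is no factorization $\mathfrak b$ of $x$ with $\mathfrak b\sqsubseteq\mathfrak a$ and $\mathfrak a\not\sqsubseteq\mathfrak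 b$. $M$ is UmF if every non-unit-divisor is a product of irreducibles and any two minimal factorizations of the same element are equivalent. A semigroup $S$ is breakable if $xy\in\{x,y\}$ for all $x,y\in S$. ''$H$ is the trivial ideal extension of $H\setminus H^\times$ by $H^\times$'' means $uy=yu=y$ for all $u\in H^\times$ and $y\in H\setminus H^\times$ (the operation on $H^\times\cup(H\setminus H^\times)$ extends those of the two disjoint semigroups by this rule). *)

(* Defs.v *)
From Stdlib Require Import List Permutation.
Import ListNotations.
Set Implicit Arguments.

Section MonoidFactorization.
Variables (T : Type) (P : T -> Prop) (mul : T -> T -> T) (e : T).

Definition mdivides (x y : T) : Prop :=
  exists u v, P u /\ P v /\ y = mul (mul u x) v.

Definition massociated (x y : T) : Prop := mdivides x y /\ mdivides y x.

Definition mproperly_divides (x y : T) : Prop := mdivides x y /\ ~ mdivides y x.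

Definition unit_divisor (x : T) : Prop := mdivides x e.

Definition mirreducible (a : T) : Prop :=
  P a /\ ~ unit_divisor a /\
  forall x y, P x -> P y -> ~ unit_divisor x -> ~ unit_divisor y ->
    mproperly_divides x a -> mproperly_divides y a -> a <> mul x y.

Definition wprod (w : list T) : T := fold_right mul e w.

Definition factorization (x : T) (w : list T) : Prop :=
  Forall mirreducible w /\ wprod w = x.

Inductive subword : list T -> list T -> Prop :=
| subword_nil : subword [] []
| subword_skip : forall x a b, subword a b -> subword a (x :: b)
| subword_take : forall x a b, subword a b -> subword (x :: a) (x :: b).

Definition wle (a b : list T) : Prop :=
  exists p c, Permutation b p /\ subword c p /\ Forall2 massociated a c.

Definition wequiv (a b : list T) : Prop := wle a b /\ wle b a.

Definition minimal_factorization (x : T) (a : list T) : Prop :=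
  factorization x a /\
  ~ (exists b, factorization x b /\ wle b a /\ ~ wle a b).

Definition UmF : Prop :=
  (forall x, P x -> ~ unit_divisor x -> exists w, factorization x w) /\
  (forall x a b, P x -> minimal_factorization x a -> minimal_factorization x b ->
     wequiv a b).

End MonoidFactorization.

Section FinSubsets.
Variables (H : Type) (mul : H -> H -> H) (one : H).

Definition finite_subset (X : H -> Prop) : Prop :=
  exists l : list H, forall x, X x -> In x l.

Definition Pfin1 (X : H -> Prop) : Prop := finite_subset X /\ X one.

Definition setmul (X Y : H -> Prop) : H -> Prop :=
  fun z => exists x y, X x /\ Y y /\ z = mul x y.

Definition set_one : H -> Prop := fun z => z = one.

Definition Pfin1_UmF : Prop := UmF Pfin1 setmul set_one.

Definition is_unit (u : H) : Prop := exists v, mul u v = one.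

Definition units_order_le2 : Prop :=
  exists l : list H, length l <= 2 /\ forall u, is_unit u -> In u l.

Definition nonunits_subsemigroup : Prop :=
  forall x y, ~ is_unit x -> ~ is_unit y -> ~ is_unit (mul x y).

Definition nonunits_breakable : Prop :=
  forall x y, ~ is_unit x -> ~ is_unit y -> mul x y = x \/ mul x y = y.

Definition trivial_ideal_extension : Prop :=
  forall u y, is_unit u -> ~ is_unit y -> mul u y = y /\ mul y u = y.

End FinSubsets.

(* Main.v *)
Require Import Defs.
From Stdlib Require Import List Permutation.
From Stdlib Require Import Classical FunctionalExtensionality PropExtensionality Lia.
Import ListNotations.
From Stdlib Require Import PeanoNat.

Section S.
Variables (H : Type) (mul : H -> H -> H) (one : H).
Hypothesis mulA : forall x y z, mul x (mul y z) = mul (mul x y) z.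
Hypothesis mulC : forall x y, mul x y = mul y x.
Hypothesis mul1 : forall x, mul one x = x.

Lemma mulr1 x : mul x one = x.
Proof. rewrite mulC; apply mul1. Qed.

Notation P := (Pfin1 one).
Notation sm := (setmul mul).
Notation S1 := (set_one one).
Notation wp := (wprod (setmul mul) (set_one one)).
Notation md := (mdivides P sm).
Notation ud := (unit_divisor P sm S1).
Notation irr := (mirreducible P sm S1).

Lemma sext (X Y : H -> Prop) : (forall z, X z <-> Y z) -> X = Y.
Proof. intro h; apply functional_extensionality; intro z; apply propositional_extensionality; auto. Qed.

Lemma P_S1 : P S1.
Proof. split. exists [one]. intros x ->. simpl; auto. reflexivity. Qed.

Lemma sm_S1_l X : sm S1 X = X.
Proof. apply sext; intro z; split.
- intros (x & y & -> & Hy & ->). rewrite mul1; auto.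
- intros Hz. exists one, z. repeat split; auto; rewrite mul1; auto. Qed.

Lemma sm_comm X Y : sm X Y = sm Y X.
Proof. apply sext; intro z; split; intros (x & y & Hx & Hy & ->); exists y, x; repeat split; auto. Qed.

Lemma sm_assoc X Y Z : sm X (sm Y Z) = sm (sm X Y) Z.
Proof. apply sext; intro z; split.
- intros (x & w & Hx & (y & u & Hy & Hu & ->) & ->). exists (mul x y), u. repeat split; auto.
  exists x, y; auto.
- intros (w & u & (x & y & Hx & Hy & ->) & Hu & ->). exists x, (mul y u). repeat split; auto.
  exists y, u; auto. Qed.

Lemma sm_S1_r X : sm X S1 = X.
Proof. rewrite sm_comm; apply sm_S1_l. Qed.

Lemma sub_l X Y z : Y one -> X z -> sm X Y z.
Proof. intros h1 h2; exists z, one; repeat split; auto; rewrite mulr1; auto. Qed.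
Lemma sub_r X Y z : X one -> Y z -> sm X Y z.
Proof. intros h1 h2; exists one, z; repeat split; auto; rewrite mul1; auto. Qed.

Lemma div_sub X Y : md X Y -> forall z, X z -> Y z.
Proof. intros (u & v & [_ Hu] & [_ Hv] & ->) z Hz. apply sub_l; auto. apply sub_r; auto. Qed.

Lemma md_refl X : md X X.
Proof. exists S1, S1. split. apply P_S1. split. apply P_S1. rewrite sm_S1_l, sm_S1_r; auto. Qed.

Lemma assoc_refl X : massociated P sm X X.
Proof. split; apply md_refl. Qed.

Lemma assoc_eq X Y : massociated P sm X Y -> X = Y.
Proof. intros [h1 h2]. apply sext; intro z; split; [apply div_sub; auto | apply div_sub; auto]. Qed.

Lemma Forall2_assoc_eq a c : Forall2 (massociated P sm) a c -> a = c.
Proof. induction 1; auto. f_equal; auto. apply assoc_eq; auto. Qed.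

Lemma Forall2_assoc_refl a : Forall2 (massociated P sm) a a.
Proof. induction a; constructor; auto. apply assoc_refl. Qed.

Lemma ud_sub X : ud X -> forall z, X z -> z = one.
Proof. intros h z hz. apply (div_sub _ _ h z hz). Qed.

Lemma not_ud_ex X : P X -> ~ ud X -> exists z, X z /\ z <> one.
Proof. intros [_ h1] h. apply NNPP; intro hn. apply h.
  assert (X = S1) as ->. { apply sext; intro z; split. intro hz. apply NNPP; intro hz'. apply hn; eauto.
  intros ->; auto. } apply md_refl. Qed.

Lemma proper_ex X A : mproperly_divides P sm X A -> (forall z, X z -> A z) /\ exists z, A z /\ ~ X z.
Proof. intros [h1 h2]. split. apply div_sub; auto.
  apply NNPP; intro hn. apply h2. assert (A = X) as ->.
  { apply sext; intro z; split. intro hz. apply NNPP; intro hz'. apply hn; eauto. apply div_sub; auto. }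
  apply md_refl. Qed.

Lemma irr_one A : irr A -> A one.
Proof. intros [[_ h] _]; auto. Qed.

Lemma wp_one w : Forall (fun X => X one) w -> wp w one.
Proof. induction 1; simpl. reflexivity. apply sub_l; auto. Qed.

Lemma wp_perm a b : Permutation a b -> wp a = wp b.
Proof. induction 1; simpl; auto.
- rewrite IHPermutation; auto.
- rewrite !sm_assoc. rewrite (sm_comm y x); auto.
- congruence. Qed.

Lemma subword_mono c p : subword c p -> Forall (fun X => X one) p -> forall z, wp c z -> wp p z.
Proof. induction 1; intros hF z hz; inversion hF; subst; simpl; auto.
- apply sub_r; auto.
- destruct hz as (x0 & y & hx & hy & ->). exists x0, y; repeat split; auto. Qed.

Lemma subword_len (c p : list (H -> Prop)) : subword c p -> length c <= length p.
Proof. induction 1; simpl; lia. Qed.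

Lemma subword_eqlen (c p : list (H -> Prop)) : subword c p -> length c = length p -> c = p.
Proof. induction 1; simpl; intros; auto.
- apply subword_len in H0. lia.
- f_equal; auto. Qed.

Lemma subword_shorter (c p : list (H -> Prop)) : subword c p -> length c < length p ->
  exists p1 y p2, p = p1 ++ y :: p2 /\ subword c (p1 ++ p2).
Proof. induction 1; simpl; intros hl.
- lia.
- exists [], x, b; auto.
- destruct IHsubword as (p1 & y & p2 & -> & hs). lia.
  exists (x :: p1), y, p2; split. reflexivity. simpl. apply subword_take; auto. Qed.

Lemma subword_refl (a : list (H -> Prop)) : subword a a.
Proof. induction a; [apply subword_nil | apply subword_take; auto]. Qed.

Lemma subword_remove (l1 l2 : list (H -> Prop)) y : subword (l1 ++ l2) (l1 ++ y :: l2).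
Proof. induction l1; simpl. apply subword_skip; apply subword_refl. apply subword_take; auto. Qed.

Lemma wle_len a b : wle P sm a b -> length a <= length b.
Proof. intros (p & c & hp & hs & hf). apply Forall2_length in hf. apply subword_len in hs.
  apply Permutation_length in hp. lia. Qed.

Lemma wle_eqlen a b : wle P sm a b -> length a = length b -> Permutation b a.
Proof. intros (p & c & hp & hs & hf) hl. apply Forall2_assoc_eq in hf; subst c.
  apply subword_eqlen in hs. subst; auto. apply Permutation_length in hp. lia. Qed.

Lemma Forall_perm (Q : (H -> Prop) -> Prop) a b : Permutation a b -> Forall Q a -> Forall Q b.
Proof. intros hp hf. rewrite Forall_forall in *. intros x hx. apply hf.
  eapply Permutation_in; [apply Permutation_sym; eauto| auto]. Qed.

Lemma minimal_of X a :
  Forall irr a -> wp a = X ->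
  (forall a1 y a2, a = a1 ++ y :: a2 -> exists z, X z /\ ~ wp (a1 ++ a2) z) ->
  minimal_factorization P sm S1 X a.
Proof. intros hF hX hR. split. split; auto.
  intros (b & [hFb hb] & (p & c & hp & hs & hf) & hn).
  apply Forall2_assoc_eq in hf; subst c.
  destruct (Nat.lt_ge_cases (length b) (length p)) as [hl|hl].
  - destruct (subword_shorter _ _ hs hl) as (p1 & y & p2 & -> & hs').
    assert (In y a) as hy. { eapply Permutation_in. apply Permutation_sym, hp. apply in_elt. }
    destruct (in_split _ _ hy) as (a1 & a2 & ->).
    assert (Permutation (a1 ++ a2) (p1 ++ p2)) as hp'. { eapply Permutation_app_inv; eauto. }
    destruct (hR a1 y a2 eq_refl) as (z & hz & hnz). apply hnz.
    rewrite (wp_perm _ _ hp'). apply subword_mono with b; auto.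
    + apply Forall_perm with (a1 ++ a2); auto. apply Forall_app in hF as [h1 h2]. inversion h2; subst.
      apply Forall_app; split; eapply Forall_impl; try eassumption; apply irr_one.
    + rewrite hb; auto.
  - apply subword_len in hs as hs2. assert (b = p) as -> by (apply subword_eqlen; auto; lia).
    apply hn. exists a, a. split. apply Permutation_sym; auto. split. apply subword_refl.
    apply Forall2_assoc_refl. Qed.

Definition pair (x : H) : H -> Prop := fun z => z = one \/ z = x.

Lemma P_pair x : P (pair x).
Proof. split. exists [one; x]. intros z [-> | ->]; simpl; auto. left; auto. Qed.

Lemma irr_pair x : x <> one -> irr (pair x).
Proof. intros hx. split. apply P_pair. split.
- intro h. apply hx. apply (ud_sub _ h). right; auto.
- intros X Y hX hY hnX hnY hpX hpY _.
  destruct (not_ud_ex X hX hnX) as (z & hz & hz1).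
  destruct (proper_ex _ _ hpX) as [hs (w & hw & hnw)].
  apply hnw. destruct hw as [-> | ->]. apply hX.
  destruct (hs z hz) as [-> | ->]; tauto. Qed.

Section Union.
Hypothesis Hu : forall a b, mul a b = one \/ mul a b = a \/ mul a b = b.

Lemma union X Y z : X one -> Y one -> (sm X Y z <-> X z \/ Y z).
Proof. intros h1 h2; split.
- intros (x & y & hx & hy & ->). destruct (Hu x y) as [e|[e|e]]; rewrite e; auto.
- intros [h|h]. apply sub_l; auto. apply sub_r; auto. Qed.

Lemma wp_mem w z : Forall (fun X => X one) w -> (wp w z <-> z = one \/ exists A, In A w /\ A z).
Proof. intros hF; induction hF; simpl.
- split; auto. intros [h | (A & [] & _)]; auto.
- rewrite union; auto. 2: apply wp_one; auto. rewrite IHhF. split.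
  + intros [h | [h | (A & hA & h)]]; eauto.
  + intros [h | (A & [<- | hA] & h)]; subst; auto. right; right; eauto. Qed.

Lemma irr_is_pair A : irr A -> exists x, x <> one /\ A = pair x.
Proof. intros hA. destruct hA as [hP [hnu hdec]].
  destruct (not_ud_ex A hP hnu) as (x & hx & hx1). exists x; split; auto.
  apply sext; intro z; split.
  2: intros [-> | ->]; auto; apply hP.
  intro hz. apply NNPP; intro hn. unfold pair in hn.
  set (Am := fun w => A w /\ w <> x).
  assert (hAm1 : Am one) by (split; [apply hP | auto]).
  assert (hAm : P Am).
  { split; auto. destruct hP as [(l & hl) _]. exists l. intros w [hw _]; auto. }
  assert (hsplit : A = sm (pair x) Am).
  { apply sext; intro w. rewrite union; auto. 2: left; auto. unfold pair, Am.
    split. intro hw. destruct (classic (w = x)); auto. intros [[-> | ->] | [hw _]]; auto; apply hP. }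
  apply (hdec (pair x) Am (P_pair x) hAm).
  - intro h. apply hx1. apply (ud_sub _ h). right; auto.
  - intro h. apply hn. left. apply (ud_sub _ h). split; auto.
  - split.
    + exists S1, A. split; [apply P_S1|]. split; [exact hP|]. rewrite sm_S1_l.
      apply sext; intro w; rewrite union; [| left; auto | apply hP]. split; auto. intros [[-> | ->] | h]; auto; apply hP.
    + intro h. apply hn. apply (div_sub _ _ h z hz).
  - split.
    + exists S1, A. split; [apply P_S1|]. split; [exact hP|]. rewrite sm_S1_l.
      apply sext; intro w; rewrite union; [| exact hAm1 | apply hP]. split; auto. intros [[h _] | h]; auto.
    + intro h. destruct (div_sub _ _ h x hx). auto.
  - exact hsplit. Qed.

Lemma irr_Fone w : Forall irr w -> Forall (fun X => X one) w.
Proof. intro h; eapply Forall_impl; [|exact h]. apply irr_one. Qed.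

Lemma in_fact X a b A : factorization P sm S1 X a -> factorization P sm S1 X b -> In A a -> In A b.
Proof. intros [ha ea] [hb eb] hA.
  assert (irr A) as hiA by (rewrite Forall_forall in ha; auto).
  destruct (irr_is_pair A hiA) as (x & hx & ->).
  assert (X x) as hXx. { rewrite <- ea. apply wp_mem. apply irr_Fone; auto. right; exists (pair x); split; auto. right; auto. }
  rewrite <- eb in hXx. apply wp_mem in hXx. 2: apply irr_Fone; auto.
  destruct hXx as [h | (B & hB & hBx)]. congruence.
  assert (irr B) as hiB by (rewrite Forall_forall in hb; auto).
  destruct (irr_is_pair B hiB) as (y & hy & ->). destruct hBx as [h | <-]. congruence. auto. Qed.

Lemma dup_split (l : list (H -> Prop)) : ~ NoDup l -> exists l1 y l2, l = l1 ++ y :: l2 /\ In y (l1 ++ l2).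
Proof. induction l as [|x l IH]; intro hn. exfalso; apply hn; constructor.
  destruct (classic (In x l)). exists [], x, l; auto.
  destruct IH as (l1 & y & l2 & -> & hy). intro hnd. apply hn; constructor; auto.
  exists (x :: l1), y, l2; split; auto. simpl; auto. Qed.

Lemma min_nodup X a : minimal_factorization P sm S1 X a -> NoDup a.
Proof. intros [[hF hX] hmin]. apply NNPP; intro hn.
  destruct (dup_split _ hn) as (l1 & y & l2 & -> & hy). apply hmin.
  apply Forall_app in hF as hF'. destruct hF' as [hF1 hF2]. inversion hF2; subst.
  exists (l1 ++ l2). split. split. apply Forall_app; auto.
  - apply sext; intro z. rewrite !wp_mem; try (apply irr_Fone; auto; apply Forall_app; auto).
    split; intros [h | (A & hA & hz)]; auto; right.
    + exists A; split; auto. apply in_app_or in hA. apply in_or_app. destruct hA; simpl; auto.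
    + apply in_app_or in hA. destruct hA as [hA | [e | hA]]; [exists A; split; auto; apply in_or_app; auto | exists y; split; [exact hy | rewrite e; exact hz] | exists A; split; auto; apply in_or_app; auto].
  - split. exists (l1 ++ y :: l2), (l1 ++ l2). split. auto. split. apply subword_remove. apply Forall2_assoc_refl.
    intro h. apply wle_len in h. rewrite !length_app in h. simpl in h. lia. Qed.

Lemma wle_of_incl a b : NoDup a -> (forall A, In A a -> In A b) -> wle P sm a b.
Proof. revert b; induction a as [|A a IH]; intros b hnd hin.
- exists b, []. split; auto. split. clear hin hnd; induction b; [apply subword_nil | apply subword_skip; auto]. constructor.
- inversion hnd; subst. destruct (in_split A b) as (b1 & b2 & ->). apply hin; left; auto.
  destruct (IH (b1 ++ b2)) as (p & c & hp & hs & hf); auto.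
  { intros A' hA'. assert (In A' (b1 ++ A :: b2)) as h by (apply hin; right; auto).
    apply in_app_or in h; apply in_or_app. destruct h as [h | [<- | h]]; auto. contradiction. }
  exists (A :: p), (A :: c). split.
  eapply Permutation_trans. apply Permutation_sym, Permutation_middle. constructor; auto.
  split. apply subword_take; auto. constructor; auto. apply assoc_refl. Qed.

Lemma build X l : exists w, Forall irr w /\ forall z, wp w z <-> z = one \/ (In z l /\ X z).
Proof. induction l as [|x l IH].
- exists []. split; auto. simpl. intro z. unfold set_one. split; auto. intros [h | [[] _]]; auto.
- destruct IH as (w & hw & hz). destruct (classic (X x /\ x <> one)) as [[h1 h2] | h].
  + exists (pair x :: w). split. constructor; auto. apply irr_pair; auto.
    intro z. simpl. rewrite union. 2: left; auto. 2: apply wp_one, irr_Fone; auto. rewrite hz. unfold pair.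
    split. intros [[e | e] | [e | [e1 e2]]]; subst; auto. intros [e | [[e | e] e2]]; subst; auto.
  + exists w; split; auto. intro z; rewrite hz. simpl. split. intros [e | [e1 e2]]; auto.
    intros [e | [[e | e] e2]]; subst; auto. left. apply NNPP; intro hn. apply h; auto. Qed.

Lemma b_to_a : Pfin1_UmF mul one.
Proof. split.
- intros X hX hnu. destruct hX as [(l & hl) h1]. destruct (build X l) as (w & hw & hz).
  exists w. split; auto. apply sext; intro z. rewrite hz. split. intros [-> | [_ h]]; auto.
  intro h. right; auto.
- intros X a b _ ha hb. split; apply wle_of_incl; try (eapply min_nodup; eauto);
  intros A hA; eapply in_fact; eauto; [apply ha | apply hb | apply hb | apply ha]. Qed.
End Union.

Lemma wp1 X : wp [X] = X.
Proof. simpl. apply sm_S1_r. Qed.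
Lemma wp2 X Y : wp [X; Y] = sm X Y.
Proof. simpl. rewrite sm_S1_r; auto. Qed.
Lemma wp3 X Y Z : wp [X; Y; Z] = sm X (sm Y Z).
Proof. simpl. rewrite sm_S1_r; auto. Qed.

Definition triple a b : H -> Prop := fun z => z = one \/ z = a \/ z = b.
Definition quad a b c : H -> Prop := fun z => z = one \/ z = a \/ z = b \/ z = c.

Lemma P_triple a b : P (triple a b).
Proof. split. exists [one; a; b]. intros z [-> | [-> | ->]]; simpl; auto. left; auto. Qed.
Lemma P_quad a b c : P (quad a b c).
Proof. split. exists [one; a; b; c]. intros z [-> | [-> | [-> | ->]]]; simpl; auto. left; auto. Qed.

Section Key.
Hypothesis U : forall x a b, P x -> minimal_factorization P sm S1 x a ->
  minimal_factorization P sm S1 x b -> wequiv P sm a b.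

Lemma caseA c : ~ (mul c c = one \/ mul c c = c) -> False.
Proof. intro hc.
  assert (hc1 : c <> one) by (intro e; apply hc; left; rewrite e, mul1; auto).
  assert (hc2 : mul c c <> one) by (intro e; apply hc; auto).
  destruct (classic (mul c (mul c c) = one \/ mul c (mul c c) = c \/ mul c (mul c c) = mul c c)) as [h3 | h3].
  - assert (e1 : sm (pair c) (pair c) = triple c (mul c c)).
    { apply sext; intro z; split.
      - intros (x & y & [-> | ->] & [-> | ->] & ->); rewrite ?mul1, ?mulr1; unfold triple; auto.
      - intros [-> | [-> | ->]]. exists one, one; unfold pair; rewrite mul1; auto.
        exists c, one; unfold pair; rewrite mulr1; auto. exists c, c; unfold pair; auto. }
    assert (e2 : sm (pair c) (pair (mul c c)) = triple c (mul c c)).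
    { apply sext; intro z; split.
      - intros (x & y & [-> | ->] & [-> | ->] & ->); rewrite ?mul1, ?mulr1; unfold triple; auto.
      - intros [-> | [-> | ->]]. exists one, one; unfold pair; rewrite mul1; auto.
        exists c, one; unfold pair; rewrite mulr1; auto. exists one, (mul c c); unfold pair; rewrite mul1; auto. }
    destruct (U (triple c (mul c c)) [pair c; pair c] [pair c; pair (mul c c)]) as [_ hw].
    + apply P_triple.
    + apply minimal_of. repeat (apply Forall_cons; [apply irr_pair; auto|]); apply Forall_nil. rewrite wp2; auto.
      intros a1 y a2 E. destruct a1 as [|? [|? ?]]; simpl in E; inversion E; subst; simpl.
      * exists (mul c c). split. unfold triple; auto. rewrite sm_S1_r. exact hc.
      * exists (mul c c). split. unfold triple; auto. rewrite sm_S1_r. exact hc.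
      * destruct l; discriminate.
    + apply minimal_of. repeat (apply Forall_cons; [apply irr_pair; auto|]); apply Forall_nil. rewrite wp2; auto.
      intros a1 y a2 E. destruct a1 as [|? [|? ?]]; simpl in E; inversion E; subst; simpl.
      * exists c. split. unfold triple; auto. rewrite sm_S1_r. unfold pair. intros [e | e]; auto.
      * exists (mul c c). split. unfold triple; auto. rewrite sm_S1_r. exact hc.
      * destruct l; discriminate.
    + apply wle_eqlen in hw; auto. assert (In (pair (mul c c)) [pair c; pair c]) as hi.
      { eapply Permutation_in. apply Permutation_sym, hw. simpl; auto. }
      assert (pair (mul c c) = pair c) as e by (destruct hi as [e | [e | []]]; auto).
      assert (pair c (mul c c)) as hh by (rewrite <- e; right; auto). apply hc; exact hh.
  - assert (e1 : sm (pair c) (sm (pair c) (pair c)) = quad c (mul c c) (mul c (mul c c))).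
    { apply sext; intro z; split.
      - intros (x & w & [-> | ->] & (y & u & [-> | ->] & [-> | ->] & ->) & ->); rewrite ?mul1, ?mulr1; unfold quad; auto.
      - intros [-> | [-> | [-> | ->]]].
        exists one, one; unfold pair; rewrite mul1; repeat split; auto. exists one, one; rewrite mul1; auto.
        exists c, one; unfold pair; rewrite mulr1; repeat split; auto. exists one, one; rewrite mul1; auto.
        exists c, c; unfold pair; repeat split; auto. exists c, one; rewrite mulr1; auto.
        exists c, (mul c c); unfold pair; repeat split; auto. exists c, c; auto. }
    assert (e2 : sm (pair c) (pair (mul c c)) = quad c (mul c c) (mul c (mul c c))).
    { apply sext; intro z; split.
      - intros (x & y & [-> | ->] & [-> | ->] & ->); rewrite ?mul1, ?mulr1; unfold quad; auto.
      - intros [-> | [-> | [-> | ->]]]. exists one, one; unfold pair; rewrite mul1; auto.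
        exists c, one; unfold pair; rewrite mulr1; auto. exists one, (mul c c); unfold pair; rewrite mul1; auto.
        exists c, (mul c c); unfold pair; auto. }
    destruct (U (quad c (mul c c) (mul c (mul c c))) [pair c; pair c; pair c] [pair c; pair (mul c c)]) as [hw _].
    + apply P_quad.
    + apply minimal_of. repeat (apply Forall_cons; [apply irr_pair; auto|]); apply Forall_nil. rewrite wp3; auto.
      assert (forall a1 a2, a1 ++ a2 = [pair c; pair c] -> exists z, quad c (mul c c) (mul c (mul c c)) z /\ ~ wp (a1 ++ a2) z) as hg.
      { intros a1 a2 ->. exists (mul c (mul c c)). split. unfold quad; auto. rewrite wp2.
        intros (x & y & hx & hy & e). destruct hx as [-> | ->], hy as [-> | ->]; rewrite ?mul1, ?mulr1 in e; apply h3; auto. }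
      intros a1 y a2 E. apply hg. destruct a1 as [|? [|? [|? ?]]]; simpl in E; inversion E; subst; simpl; auto.
      destruct l; discriminate.
    + apply minimal_of. repeat (apply Forall_cons; [apply irr_pair; auto|]); apply Forall_nil. rewrite wp2; auto.
      intros a1 y a2 E. destruct a1 as [|? [|? ?]]; simpl in E; inversion E; subst; simpl.
      * exists c. split. unfold quad; auto. rewrite sm_S1_r. unfold pair. intros [e | e]; auto.
      * exists (mul c c). split. unfold quad; auto. rewrite sm_S1_r. exact hc.
      * destruct l; discriminate.
    + apply wle_len in hw. simpl in hw. lia.
Qed.

Lemma caseB (Hno : forall c, mul c c = one \/ mul c c = c) a b :
  ~ (mul a b = one \/ mul a b = a \/ mul a b = b) -> False.
Proof. intro hab.
  assert (ha1 : a <> one) by (intro e; apply hab; rewrite e, mul1; auto).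
  assert (hb1 : b <> one) by (intro e; apply hab; rewrite e, mulr1; auto).
  assert (hne : a <> b) by (intro e; apply hab; rewrite <- e; destruct (Hno a); auto).
  assert (hab1 : mul a b <> one) by auto.
  assert (e1 : sm (pair a) (pair b) = quad a b (mul a b)).
  { apply sext; intro z; split.
    - intros (x & y & [-> | ->] & [-> | ->] & ->); rewrite ?mul1, ?mulr1; unfold quad; auto.
    - intros [-> | [-> | [-> | ->]]]. exists one, one; unfold pair; rewrite mul1; auto.
      exists a, one; unfold pair; rewrite mulr1; auto. exists one, b; unfold pair; rewrite mul1; auto.
      exists a, b; unfold pair; auto. }
  assert (e2 : sm (triple a b) (pair (mul a b)) = quad a b (mul a b)).
  { apply sext; intro z; split.
    - intros (x & y & [-> | [-> | ->]] & [-> | ->] & ->); rewrite ?mul1, ?mulr1; unfold quad; auto.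
      + rewrite mulA. destruct (Hno a) as [e | e]; rewrite e, ?mul1; auto.
      + rewrite (mulC a b), mulA. destruct (Hno b) as [e | e]; rewrite e, ?mul1; auto.
    - intros [-> | [-> | [-> | ->]]]. exists one, one; unfold pair, triple; rewrite mul1; auto.
      exists a, one; unfold pair, triple; rewrite mulr1; auto. exists b, one; unfold pair, triple; rewrite mulr1; auto.
      exists one, (mul a b); unfold pair, triple; rewrite mul1; auto. }
  assert (hY : irr (triple a b)).
  { split. apply P_triple. split.
    - intro h. apply ha1. apply (ud_sub _ h). right; left; auto.
    - intros S T hS hT hnS hnT hpS hpT e.
      assert (miss : forall S : H -> Prop, P S -> mproperly_divides P sm S (triple a b) ->
        (forall z, S z -> z = one \/ z = b) \/ (forall z, S z -> z = one \/ z = a)).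
      { intros S0 [_ h0] hp. destruct (proper_ex _ _ hp) as [hs (m & hm & hnm)].
        destruct hm as [-> | [-> | ->]]. contradiction.
        left. intros z hz. destruct (hs z hz) as [h | [h | h]]; auto. subst; contradiction.
        right. intros z hz. destruct (hs z hz) as [h | [h | h]]; auto. subst; contradiction. }
      destruct (not_ud_ex S hS hnS) as (s & hs & hs1).
      destruct (not_ud_ex T hT hnT) as (t & ht & ht1).
      assert (hST : forall x y, S x -> T y -> triple a b (mul x y)).
      { intros x y hx hy. rewrite e. exists x, y; auto. }
      destruct (miss S hS hpS) as [Sb | Sa], (miss T hT hpT) as [Tb | Ta].
      + assert (triple a b a) as hta by (right; left; auto). rewrite e in hta.
        destruct hta as (x & y & hx & hy & ex).
        destruct (Sb x hx) as [-> | ->], (Tb y hy) as [-> | ->]; rewrite ?mul1, ?mulr1 in ex; auto.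
        destruct (Hno b) as [e' | e']; rewrite e' in ex; auto.
      + destruct (Sb s hs) as [? | ->]; [contradiction|]. destruct (Ta t ht) as [? | ->]; [contradiction|].
        apply hab. rewrite mulC. apply hST; auto.
      + destruct (Sa s hs) as [? | ->]; [contradiction|]. destruct (Tb t ht) as [? | ->]; [contradiction|].
        apply hab. apply hST; auto.
      + assert (triple a b b) as hta by (right; right; auto). rewrite e in hta.
        destruct hta as (x & y & hx & hy & ex).
        destruct (Sa x hx) as [-> | ->], (Ta y hy) as [-> | ->]; rewrite ?mul1, ?mulr1 in ex; auto.
        destruct (Hno a) as [e' | e']; rewrite e' in ex; auto. }
  destruct (U (quad a b (mul a b)) [pair a; pair b] [triple a b; pair (mul a b)]) as [hw _].
  - apply P_quad.
  - apply minimal_of. repeat (apply Forall_cons; [apply irr_pair; auto|]); apply Forall_nil. rewrite wp2; auto.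
    intros a1 y a2 E. destruct a1 as [|? [|? ?]]; simpl in E; inversion E; subst; simpl.
    * exists a. split. unfold quad; auto. rewrite sm_S1_r. unfold pair. intros [h | h]; auto.
    * exists b. split. unfold quad; auto. rewrite sm_S1_r. unfold pair. intros [h | h]; auto.
    * destruct l; discriminate.
  - apply minimal_of. apply Forall_cons; auto. apply Forall_cons; [apply irr_pair; auto| apply Forall_nil]. rewrite wp2; auto.
    intros a1 y a2 E. destruct a1 as [|? [|? ?]]; simpl in E; inversion E; subst; simpl.
    * exists a. split. unfold quad; auto. rewrite sm_S1_r. unfold pair. intros [h | h]; auto.
    * exists (mul a b). split. unfold quad; auto. rewrite sm_S1_r. exact hab.
    * destruct l; discriminate.
  - apply wle_eqlen in hw; auto. assert (In (triple a b) [pair a; pair b]) as hi.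
    { eapply Permutation_in. exact hw. simpl; auto. }
    destruct hi as [h | [h | []]].
    + assert (pair a b) as hh by (rewrite h; right; right; auto). destruct hh; auto.
    + assert (pair b a) as hh by (rewrite h; right; left; auto). destruct hh; auto.
Qed.

Lemma key a b : mul a b = one \/ mul a b = a \/ mul a b = b.
Proof. apply NNPP; intro hab.
  destruct (classic (exists c, ~ (mul c c = one \/ mul c c = c))) as [[c hc] | hn].
  - exact (caseA c hc).
  - apply (caseB (fun c => NNPP _ (fun h => hn (ex_intro _ c h))) a b hab). Qed.
End Key.

Lemma Hu_to_b (Hu : forall a b, mul a b = one \/ mul a b = a \/ mul a b = b) :
  nonunits_subsemigroup mul one /\ nonunits_breakable mul one /\
  units_order_le2 mul one /\ trivial_ideal_extension mul one.
Proof. split; [|split; [|split]].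
- intros x y hx hy [v hv]. destruct (Hu x y) as [e | [e | e]].
  + apply hx; exists y; auto.
  + rewrite e in hv. apply hx; exists v; auto.
  + rewrite e in hv. apply hy; exists v; auto.
- intros x y hx hy. destruct (Hu x y) as [e | [e | e]]; auto. exfalso; apply hx; exists y; auto.
- destruct (classic (exists u, is_unit mul one u /\ u <> one)) as [[u [[v hv] hu1]] | hn].
  + exists [one; u]. split. simpl; auto.
    assert (huu : mul u u = one).
    { destruct (Hu u u) as [e | [e | e]]; auto; exfalso; apply hu1;
      (transitivity (mul u (mul u v)); [rewrite hv, mulr1; auto | rewrite mulA, e, hv; auto]). }
    intros w [w' hw]. destruct (classic (w = one)) as [-> | hw1]. left; auto. right; left.
    destruct (Hu u w) as [e | [e | e]].
    * rewrite <- (mul1 w), <- huu, <- mulA, e, mulr1; auto.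
    * exfalso; apply hw1. rewrite <- (mul1 w), <- huu, <- mulA, e, huu; auto.
    * exfalso; apply hu1. rewrite <- (mulr1 u), <- hw, mulA, e; auto.
  + exists [one]. split. simpl; auto. intros w hw. destruct (classic (w = one)). left; auto.
    exfalso; apply hn; eauto.
- intros u y [v hv] hy. destruct (Hu u y) as [e | [e | e]].
  + exfalso; apply hy. exists u. rewrite mulC; auto.
  + exfalso; apply hy. exists one. rewrite mulr1.
    rewrite <- (mul1 y), <- hv, (mulC u v), <- mulA, e, mulC; auto.
  + split; auto. rewrite mulC; auto.
Qed.

Lemma b_to_Hu : nonunits_subsemigroup mul one /\ nonunits_breakable mul one /\
  units_order_le2 mul one /\ trivial_ideal_extension mul one ->
  forall a b, mul a b = one \/ mul a b = a \/ mul a b = b.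
Proof. intros (_ & br & (l & hl & hu) & tie) a b.
  destruct (classic (is_unit mul one a)) as [ha | ha], (classic (is_unit mul one b)) as [hb | hb].
  - destruct (classic (a = one)) as [-> | ha1]. right; right; apply mul1.
    assert (h1 := hu one (ex_intro _ one (mul1 one))). assert (h2 := hu a ha).
    assert (h3 : In (mul a b) l).
    { apply hu. destruct ha as [v hv], hb as [w hw]. exists (mul w v).
      rewrite mulA, <- (mulA a b w), hw, mulr1; auto. }
    clear hu br mulA mulC mul1 ha hb. destruct l as [|x [|y [|z l]]].
    + destruct h1.
    + destruct h1 as [h1 | []]; destruct h2 as [h2 | []]. exfalso; congruence.
    + destruct h1 as [h1 | [h1 | []]]; destruct h2 as [h2 | [h2 | []]]; destruct h3 as [h3 | [h3 | []]].
      all: try (exfalso; congruence).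
      all: try (left; congruence).
      all: try (right; left; congruence).
      all: try (right; right; congruence).
    + simpl in hl. lia.
  - right; right. apply (tie a b ha hb).
  - right; left. apply (tie b a hb ha).
  - destruct (br a b ha hb); auto.
Qed.
End S.

Theorem theorem4p8 (H : Type) (mul : H -> H -> H) (one : H)
  (mulA : forall x y z, mul x (mul y z) = mul (mul x y) z)
  (mulC : forall x y, mul x y = mul y x)
  (mul1 : forall x, mul one x = x) :
  Pfin1_UmF mul one <->
  (nonunits_subsemigroup mul one /\ nonunits_breakable mul one /\
   units_order_le2 mul one /\ trivial_ideal_extension mul one).
Proof.
  split.
  - intros h. apply Hu_to_b; auto. intros a b. apply (key H mul one mulA mulC mul1 (proj2 h)).
  - intros h. apply b_to_a; auto. apply b_to_Hu; auto.
Qed.
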